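(* Let $p\ge3$ and let $\{(a_j,b_j)\}_{j\ge1}$ be a $p$-periodic sequence with $a_j>0$, $b_j\in\mathbb{R}$. Let $m$ be the discrete $m$-function with continued fraction coefficients $\{(a_j,b_j)\}_{j\ge1}$, and let $m^-$ be the discrete $m$-function whose continued fraction coefficients are purely periodic with one period given by \[ (a_{p-1},b_p),(a_{p-2},b_{p-1}),\ldots,(a_1,b_2),(a_p,b_1). \] For $N\in\mathbb{N}$ let $m_N$ denote the discrete $m$-function with continued fraction coefficients $\{(a_n,b_n)\}_{n\ge N+1}$. Then for $\ell\in\{1,\ldots,p-2\}$, the sequence $\{(a_j,b_j)\}$ is doubly palindromic with period $p$ and first length $\ell$ if and only if $m^-=m_{\ell+1}$.
   Context: A discrete $m$-function is a function $m(z)=\int\frac{d\rho(x)}{x-z}$ on $\mathbb{C}_+=\{z:\operatorname{Im} z>0\}$, where $\rho$ is a probability measure on $\mathbb{R}$ with compact support. Such $m$ has a unique continued fraction expansion \[ m(z)=\cfrac{1}{b_1-z-\cfrac{a_1^2}{b_2-z-\cfrac{a_2^2}{b_3-z-\cdots}}} \] valid on $\mathbb{C}_+$, with bounded sequences $a_n>0$, $b_n\in\mathbb{R}$; the pairs $\{(a_n,b_n)\}_{n\ge1}$ are its continued fraction coefficients, and conversely every bounded such sequence is the coefficient sequence of a unique discrete $m$-function. Doubly palindromic: a $p$-periodic sequence $\{(a_j,b_j)\}$ is doubly palindromic with period $p$ and first length $\ell$ ($1\le\ell\le p-2$) if the word $a_1a_2\cdots a_p$ is the concatenation of a palindrome of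 length $\ell$ and a palindrome of length $p-\ell$, and the word $b_1b_2\cdots b_p$ is the concatenation of a palindrome of length $\ell+1$ and a palindrome of length $p-\ell-1$. *)

(* Defs.v *)
From Stdlib Require Import Reals Lra Lia.
From Coquelicot Require Import Coquelicot.
Open Scope R_scope.

(* Coefficient sequences are indexed from 1, as in the paper: a j, b j for j >= 1
   (the value at index 0 is irrelevant). *)

(* cf_approx a b k n z = the continued fraction with n levels starting at index k:
     cf_approx a b k 0 z = 0,
     cf_approx a b k (n+1) z = 1 / (b_k - z - a_k^2 * cf_approx a b (k+1) n z),
   so cf_approx a b 1 n z = 1/(b_1 - z - a_1^2/(b_2 - z - ... a_{n-1}^2/(b_n - z))). *)
Fixpoint cf_approx (a b : nat -> R) (k n : nat) (z : C) : C :=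
  match n with
  | O => 0%C
  | S n' => Cinv (Cminus (Cminus (RtoC (b k)) z)
                         (Cmult (RtoC (a k ^ 2)) (cf_approx a b (S k) n' z)))
  end.

Definition is_mfun (a b : nat -> R) (m : C -> C) : Prop :=
  forall z : C, 0 < Im z ->
    filterlim (fun n => cf_approx a b 1 n z) eventually (locally (m z)).

Definition shift_seq (N : nat) (a : nat -> R) : nat -> R := fun j => a (j + N)%nat.

(* The reflected purely periodic coefficients with one period
   (a_{p-1},b_p), (a_{p-2},b_{p-1}), ..., (a_1,b_2), (a_p,b_1). *)
Definition refl_a (p : nat) (a : nat -> R) : nat -> R :=
  fun j => let k := S ((j - 1) mod p) in
           if (k <? p)%nat then a (p - k)%nat else a p.
Definition refl_b (p : nat) (b : nat -> R) : nat -> R :=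
  fun j => let k := S ((j - 1) mod p) in b (p - k + 1)%nat.

Definition periodic_coeffs (p : nat) (a b : nat -> R) : Prop :=
  forall j : nat, (1 <= j)%nat -> a (j + p)%nat = a j /\ b (j + p)%nat = b j.

(* Doubly palindromic with period p and first length l:
   a_1...a_p = (palindrome of length l)(palindrome of length p-l),
   b_1...b_p = (palindrome of length l+1)(palindrome of length p-l-1). *)
Definition doubly_palindromic (p l : nat) (a b : nat -> R) : Prop :=
  periodic_coeffs p a b /\ (1 <= l)%nat /\ (l <= p - 2)%nat /\
  (forall i, (1 <= i <= l)%nat -> a i = a (l + 1 - i)%nat) /\
  (forall i, (1 <= i <= p - l)%nat -> a (l + i)%nat = a (p + 1 - i)%nat) /\
  (forall i, (1 <= i <= l + 1)%nat -> b i = b (l + 2 - i)%nat) /\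
  (forall i, (1 <= i <= p - l - 1)%nat -> b (l + 1 + i)%nat = b (p + 1 - i)%nat).

(* Main.v *)
Require Import Defs.
From Stdlib Require Import Reals Lra Lia.
From Coquelicot Require Import Coquelicot.
Open Scope R_scope.

Definition CL (u : nat -> C) (l : C) : Prop :=
  forall eps, 0 < eps -> exists N, forall n, (N <= n)%nat -> Cmod (Cminus (u n) l) < eps.

Lemma CL_of_lim u l : filterlim u eventually (locally l) -> CL u l.
Proof.
  intros H eps He.
  assert (Hs : 0 < eps / sqrt 2).
  { apply Rdiv_lt_0_compat; [lra| apply sqrt_lt_R0; lra]. }
  destruct (proj1 (filterlim_locally u l) H (mkposreal _ Hs)) as [N HN].
  exists N; intros n Hn. specialize (HN n Hn).
  apply C_NormedModule_mixin_compat2 in HN. simpl in HN.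
  replace (sqrt 2 * (eps / sqrt 2)) with eps in HN.
  2:{ field. apply Rgt_not_eq, sqrt_lt_R0; lra. }
  exact HN.
Qed.

Lemma lim_of_CL u l : CL u l -> filterlim u eventually (locally l).
Proof.
  intros H. apply filterlim_locally. intros eps.
  destruct (H eps (cond_pos eps)) as [N HN]. exists N. intros n Hn.
  apply C_NormedModule_mixin_compat1. exact (HN n Hn).
Qed.

Lemma abs_Im_le w : Rabs (Im w) <= Cmod w.
Proof. eapply Rle_trans; [apply Rmax_r|apply Rmax_Cmod]. Qed.

Lemma Im_den (bk ak2 : R) z x :
  Im (Cminus (Cminus (RtoC bk) z) (Cmult (RtoC ak2) x)) = - Im z - ak2 * Im x.
Proof. destruct z, x; simpl; ring. Qed.

Lemma Im_inv_nonneg w : Im w < 0 -> 0 <= Im (Cinv w).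
Proof.
  destruct w as [u v]; simpl; intros Hv.
  apply Rmult_le_pos; [lra|]. apply Rlt_le, Rinv_0_lt_compat. nra.
Qed.

Lemma cf_bound a b z : 0 < Im z -> forall n k,
  0 <= Im (cf_approx a b k n z) /\ Cmod (cf_approx a b k n z) <= / Im z.
Proof.
  intros Hz n. induction n as [|n IH]; intros k; cbn [cf_approx].
  - split; [simpl; lra|]. rewrite Cmod_0. apply Rlt_le, Rinv_0_lt_compat; lra.
  - destruct (IH (S k)) as [H1 H2].
    set (w := Cminus (Cminus (RtoC (b k)) z) (Cmult (RtoC (a k ^ 2)) (cf_approx a b (S k) n z))).
    assert (Hw : Im w <= - Im z).
    { unfold w; rewrite Im_den. assert (0 <= a k ^ 2) by (apply pow2_ge_0). nra. }
    assert (Hw0 : w <> 0%C).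
    { intro E. rewrite E in Hw. simpl in Hw. lra. }
    split.
    + apply Im_inv_nonneg; lra.
    + rewrite Cmod_inv by exact Hw0. apply Rinv_le_contravar; [lra|].
      eapply Rle_trans; [|apply abs_Im_le]. rewrite Rabs_left by lra. lra.
Qed.

Lemma cf_lower a b z : 0 < Im z -> forall n k,
  / (Rabs (b k) + Cmod z + a k ^ 2 * / Im z) <= Cmod (cf_approx a b k (S n) z).
Proof.
  intros Hz n k. cbn [cf_approx].
  destruct (cf_bound a b z Hz n (S k)) as [H1 H2].
  set (x := cf_approx a b (S k) n z) in *.
  set (w := Cminus (Cminus (RtoC (b k)) z) (Cmult (RtoC (a k ^ 2)) x)).
  assert (Hw : Im w <= - Im z).
  { unfold w; rewrite Im_den. assert (0 <= a k ^ 2) by (apply pow2_ge_0). nra. }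
  assert (Hw0 : w <> 0%C).
  { intro E. rewrite E in Hw. simpl in Hw. lra. }
  rewrite Cmod_inv by exact Hw0.
  assert (Hpos : 0 < Cmod w).
  { eapply Rlt_le_trans; [|apply abs_Im_le]. rewrite Rabs_left by lra. lra. }
  apply Rinv_le_contravar; [exact Hpos|].
  unfold w, Cminus.
  eapply Rle_trans; [apply Cmod_triangle|].
  rewrite Cmod_opp, Cmod_mult, Cmod_R, (Rabs_right (a k ^ 2)) by (apply Rle_ge, pow2_ge_0).
  eapply Rle_trans; [apply Rplus_le_compat_r, Cmod_triangle|].
  rewrite Cmod_opp, Cmod_R.
  assert (0 <= a k ^ 2) by (apply pow2_ge_0). 
  apply Rplus_le_compat_l. apply Rmult_le_compat_l; auto.
Qed.

Lemma CL_le u l B N0 : (forall n, (N0 <= n)%nat -> Cmod (u n) <= B) -> CL u l -> Cmod l <= B.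
Proof.
  intros HB H. destruct (Rle_lt_dec (Cmod l) B) as [|Hlt]; auto.
  destruct (H (Cmod l - B)) as [N HN]; [lra|].
  specialize (HN (max N N0) (Nat.le_max_l _ _)).
  specialize (HB (max N N0) (Nat.le_max_r _ _)).
  set (v := u (max N N0)) in *.
  assert (E : l = Cplus v (Copp (Cminus v l))) by ring.
  assert (Cmod l <= Cmod v + Cmod (Cminus v l)).
  { rewrite E at 1. eapply Rle_trans; [apply Cmod_triangle|]. rewrite Cmod_opp. lra. }
  lra.
Qed.

Lemma CL_ge u l L N0 : (forall n, (N0 <= n)%nat -> L <= Cmod (u n)) -> CL u l -> L <= Cmod l.
Proof.
  intros HB H. destruct (Rle_lt_dec L (Cmod l)) as [|Hlt]; auto.
  destruct (H (L - Cmod l)) as [N HN]; [lra|].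
  specialize (HN (max N N0) (Nat.le_max_l _ _)).
  specialize (HB (max N N0) (Nat.le_max_r _ _)).
  set (v := u (max N N0)) in *.
  assert (E : v = Cplus l (Cminus v l)) by ring.
  assert (Cmod v <= Cmod l + Cmod (Cminus v l)).
  { rewrite E at 1. apply Cmod_triangle. }
  lra.
Qed.

Lemma cf_step a b k n z : 0 < Im z ->
  cf_approx a b k (S n) z <> 0%C /\
  Cinv (cf_approx a b k (S n) z) =
    Cminus (Cminus (RtoC (b k)) z) (Cmult (RtoC (a k ^ 2)) (cf_approx a b (S k) n z)).
Proof.
  intros Hz. cbn [cf_approx].
  destruct (cf_bound a b z Hz n (S k)) as [H1 H2].
  set (x := cf_approx a b (S k) n z) in *.
  set (w := Cminus (Cminus (RtoC (b k)) z) (Cmult (RtoC (a k ^ 2)) x)).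
  assert (Hw : Im w <= - Im z).
  { unfold w; rewrite Im_den. assert (0 <= a k ^ 2) by (apply pow2_ge_0). nra. }
  assert (Hw0 : w <> 0%C).
  { intro E. rewrite E in Hw. simpl in Hw. lra. }
  split.
  - intro E. apply (f_equal Cmod) in E. rewrite Cmod_inv, Cmod_0 in E by auto.
    assert (0 < Cmod w) by (apply Cmod_gt_0; auto).
    apply Rinv_neq_0_compat in E; [auto| lra].
  - field. auto.
Qed.

Lemma cf_shift a b : forall n k z,
  cf_approx (shift_seq 1 a) (shift_seq 1 b) k n z = cf_approx a b (S k) n z.
Proof.
  induction n as [|n IH]; intros k z; cbn [cf_approx]; auto.
  rewrite IH. unfold shift_seq. rewrite Nat.add_1_r. reflexivity.
Qed.

Lemma mfun_bounds a b m z : is_mfun a b m -> 0 < Im z ->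
  m z <> 0%C /\ Cmod (m z) <= / Im z.
Proof.
  intros Hm Hz. pose proof (CL_of_lim _ _ (Hm z Hz)) as H.
  split.
  - assert (Hl := CL_ge _ _ _ 1%nat (fun n Hn => match n as n0 return (1 <= n0)%nat -> _ with
       | O => fun h => False_rect _ (Nat.nle_succ_0 _ h)
       | S n' => fun _ => cf_lower a b z Hz n' 1 end Hn) H).
    intro E. rewrite E, Cmod_0 in Hl.
    assert (0 < / (Rabs (b 1%nat) + Cmod z + a 1%nat ^ 2 * / Im z)).
    { apply Rinv_0_lt_compat.
      assert (0 <= a 1%nat ^ 2) by apply pow2_ge_0.
      assert (0 < /Im z) by (apply Rinv_0_lt_compat; lra).
      assert (0 <= Rabs (b 1%nat)) by apply Rabs_pos.
      assert (0 < Cmod z). { eapply Rlt_le_trans; [|apply abs_Im_le]. rewrite Rabs_right; lra. }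
      nra. }
    lra.
  - apply (CL_le _ _ _ 0%nat (fun n _ => proj2 (cf_bound a b z Hz n 1)) H).
Qed.

Definition m1f (a b : nat -> R) (m : C -> C) : C -> C :=
  fun z => Cdiv (Cminus (Cminus (RtoC (b 1%nat)) z) (Cinv (m z))) (RtoC (a 1%nat ^ 2)).

Lemma mfun_shift a b m : is_mfun a b m -> a 1%nat <> 0 ->
  is_mfun (shift_seq 1 a) (shift_seq 1 b) (m1f a b m).
Proof.
  intros Hm Ha z Hz. apply lim_of_CL.
  pose proof (CL_of_lim _ _ (Hm z Hz)) as H.
  destruct (mfun_bounds a b m z Hm Hz) as [Hm0 _].
  set (L := / (Rabs (b 1%nat) + Cmod z + a 1%nat ^ 2 * / Im z)).
  assert (HL : 0 < L).
  { apply Rinv_0_lt_compat.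
    assert (0 <= a 1%nat ^ 2) by apply pow2_ge_0.
    assert (0 < /Im z) by (apply Rinv_0_lt_compat; lra).
    assert (0 <= Rabs (b 1%nat)) by apply Rabs_pos.
    assert (0 < Cmod z). { eapply Rlt_le_trans; [|apply abs_Im_le]. rewrite Rabs_right; lra. }
    nra. }
  set (A := a 1%nat ^ 2).
  assert (HA : 0 < A) by (unfold A; apply pow2_gt_0; auto).
  assert (HA0 : RtoC A <> 0%C).
  { intro E. injection E. lra. }
  assert (Hmp : 0 < Cmod (m z)) by (apply Cmod_gt_0; auto).
  intros eps He.
  assert (Hpe : 0 < eps * Cmod (m z) * L * A).
  { apply Rmult_lt_0_compat; [apply Rmult_lt_0_compat; [apply Rmult_lt_0_compat|]|]; assumption. }
  destruct (H _ Hpe) as [N HN].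
  exists N. intros n Hn. rewrite cf_shift.
  destruct (cf_step a b 1 n z Hz) as [Hc0 Hc].
  pose proof (cf_lower a b z Hz n 1) as Hlow. fold L in Hlow.
  specialize (HN (S n) ltac:(lia)).
  set (c := cf_approx a b 1 (S n) z) in *.
  set (x := cf_approx a b 2 n z) in *.
  assert (E : Cminus x (m1f a b m z) = Cmult (Cminus c (m z)) (Cinv (Cmult (Cmult (m z) c) (RtoC A)))).
  { unfold m1f. fold A.
    assert (Ex : x = Cdiv (Cminus (Cminus (RtoC (b 1%nat)) z) (Cinv c)) (RtoC A)).
    { rewrite Hc. fold A. field. auto. }
    rewrite Ex. field. repeat split; auto. }
  rewrite E, Cmod_mult, Cmod_inv.
  2:{ apply Cmult_neq_0; [apply Cmult_neq_0|]; auto. }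
  rewrite !Cmod_mult, Cmod_R, Rabs_right by lra.
  assert (Hcm : 0 < Cmod c) by lra.
  assert (Hpp : 0 < Cmod (m z) * Cmod c * A).
  { apply Rmult_lt_0_compat; [apply Rmult_lt_0_compat|]; assumption. }
  apply (Rmult_lt_reg_r (Cmod (m z) * Cmod c * A)); [exact Hpp|].
  rewrite Rmult_assoc, Rinv_l by (apply Rgt_not_eq; exact Hpp).
  rewrite Rmult_1_r.
  eapply Rlt_le_trans; [exact HN|].
  replace (eps * Cmod (m z) * L * A) with (eps * Cmod (m z) * A * L) by ring.
  replace (eps * (Cmod (m z) * Cmod c * A)) with (eps * Cmod (m z) * A * Cmod c) by ring.
  apply Rmult_le_compat_l; [|lra].
  apply Rlt_le; apply Rmult_lt_0_compat; [apply Rmult_lt_0_compat|]; assumption.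
Qed.

Lemma small_zero d K : (forall t, 1 <= t -> Rabs d <= K / t) -> d = 0.
Proof.
  intros H. destruct (Req_dec d 0) as [|Hd]; auto. exfalso.
  assert (Hpd : 0 < Rabs d) by (apply Rabs_pos_lt; auto).
  assert (HK : Rabs d <= K) by (specialize (H 1 (Rle_refl _)); unfold Rdiv in H; rewrite Rinv_1, Rmult_1_r in H; exact H).
  set (t := (K + 1) / Rabs d + 1).
  assert (Ht1 : 1 <= t).
  { unfold t. assert (0 <= (K+1)/Rabs d) by (apply Rlt_le, Rdiv_lt_0_compat; lra). lra. }
  specialize (H t Ht1).
  assert (Htd : t * Rabs d = K + 1 + Rabs d) by (unfold t; field; lra).
  assert (Rabs d * t <= K).
  { apply (Rmult_le_compat_r t) in H; [|lra].
    unfold Rdiv in H. rewrite Rmult_assoc, Rinv_l in H by lra. lra. }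
  lra.
Qed.

Lemma rel0 a b (m : C -> C) z : a 1%nat <> 0 -> m z <> 0%C ->
  Cinv (m z) = Cminus (Cminus (RtoC (b 1%nat)) z) (Cmult (RtoC (a 1%nat ^ 2)) (m1f a b m z)).
Proof.
  intros Ha Hm0. unfold m1f.
  assert (HA : RtoC (a 1%nat ^ 2) <> 0%C).
  { intro E. injection E. apply (pow_nonzero _ 2 Ha). }
  field. split; auto.
Qed.

Lemma asym a b m t : is_mfun a b m -> a 1%nat <> 0 -> 1 <= t ->
  Cmod (Cplus (Cmult ((0, t) : C) (m (0, t))) 1) <= (Rabs (b 1%nat) + a 1%nat ^ 2) / t.
Proof.
  intros Hm Ha Ht. set (z := (0, t) : C).
  assert (Hz : 0 < Im z) by (simpl; lra).
  destruct (mfun_bounds a b m z Hm Hz) as [H0 Hb].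
  pose proof (mfun_shift a b m Hm Ha) as Hm1.
  destruct (mfun_bounds _ _ _ z Hm1 Hz) as [_ Hb1].
  set (m1 := m1f a b m) in *.
  pose proof (rel0 a b m z Ha H0) as R. fold m1 in R.
  assert (E : Cplus (Cmult z (m z)) 1 =
      Cmult (m z) (Cminus (RtoC (b 1%nat)) (Cmult (RtoC (a 1%nat ^ 2)) (m1 z)))).
  { assert (E1 : Cmult (m z) (Cinv (m z)) = 1%C) by (apply Cinv_r; auto).
    rewrite R in E1.
    transitivity (Cplus (Cmult z (m z)) (Cmult (m z) (Cminus (Cminus (RtoC (b 1%nat)) z)
       (Cmult (RtoC (a 1%nat ^ 2)) (m1 z))))).
    { rewrite E1. reflexivity. }
    ring. }
  rewrite E, Cmod_mult.
  simpl Im in Hb, Hb1.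
  assert (HA : 0 <= a 1%nat ^ 2) by apply pow2_ge_0.
  assert (Hc : Cmod (Cminus (RtoC (b 1%nat)) (Cmult (RtoC (a 1%nat ^ 2)) (m1 z))) <= Rabs (b 1%nat) + a 1%nat ^ 2 * / t).
  { unfold Cminus. eapply Rle_trans; [apply Cmod_triangle|].
    rewrite Cmod_opp, Cmod_mult, !Cmod_R, (Rabs_right (a 1%nat ^ 2)) by lra.
    apply Rplus_le_compat_l, Rmult_le_compat_l; auto. }
  assert (Hit : 0 < / t <= 1).
  { split; [apply Rinv_0_lt_compat; lra|]. rewrite <- Rinv_1. apply Rinv_le_contravar; lra. }
  assert (0 <= Rabs (b 1%nat)) by apply Rabs_pos.
  unfold Rdiv.
  apply Rle_trans with (/ t * (Rabs (b 1%nat) + a 1%nat ^ 2 * / t)).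
  - apply Rmult_le_compat; auto using Cmod_ge_0.
  - assert (0 <= a 1%nat ^ 2 * / t * (1 - / t)).
    { apply Rmult_le_pos; [apply Rmult_le_pos|]; lra. }
    nra.
Qed.

Lemma first_coeff a b a' b' (m m' : C -> C) :
  is_mfun a b m -> is_mfun a' b' m' -> a 1%nat <> 0 -> a' 1%nat <> 0 ->
  a 2%nat <> 0 -> a' 2%nat <> 0 ->
  (forall z, 0 < Im z -> m z = m' z) ->
  b 1%nat = b' 1%nat /\ a 1%nat ^ 2 = a' 1%nat ^ 2.
Proof.
  intros Hm Hm' Ha Ha' Ha2 Ha2' Heq.
  set (A := a 1%nat ^ 2). set (A' := a' 1%nat ^ 2).
  assert (HA : 0 <= A) by apply pow2_ge_0.
  assert (HA' : 0 <= A') by apply pow2_ge_0.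
  pose proof (mfun_shift a b m Hm Ha) as Hm1.
  pose proof (mfun_shift a' b' m' Hm' Ha') as Hm1'.
  set (m1 := m1f a b m) in *. set (m1' := m1f a' b' m') in *.
  assert (Eq : forall z, 0 < Im z ->
     Cminus (Cminus (RtoC (b 1%nat)) z) (Cmult (RtoC A) (m1 z)) =
     Cminus (Cminus (RtoC (b' 1%nat)) z) (Cmult (RtoC A') (m1' z))).
  { intros z Hz. destruct (mfun_bounds a b m z Hm Hz) as [H0 _].
    destruct (mfun_bounds a' b' m' z Hm' Hz) as [H0' _].
    unfold A, A', m1, m1'. rewrite <- (rel0 a b m z Ha H0), <- (rel0 a' b' m' z Ha' H0').
    rewrite Heq; auto. }
  assert (Hb : b 1%nat = b' 1%nat).
  { assert (d0 : b 1%nat - b' 1%nat = 0); [|lra].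
    apply (small_zero _ (A + A')). intros t Ht.
    set (z := (0, t) : C). assert (Hz : 0 < Im z) by (simpl; lra).
    assert (E : RtoC (b 1%nat - b' 1%nat) = Cminus (Cmult (RtoC A) (m1 z)) (Cmult (RtoC A') (m1' z))).
    { rewrite RtoC_minus.
      replace (Cminus (RtoC (b 1%nat)) (RtoC (b' 1%nat))) with
        (Cplus (Cminus (Cminus (Cminus (RtoC (b 1%nat)) z) (Cmult (RtoC A) (m1 z)))
                (Cminus (Cminus (RtoC (b' 1%nat)) z) (Cmult (RtoC A') (m1' z))))
               (Cminus (Cmult (RtoC A) (m1 z)) (Cmult (RtoC A') (m1' z)))) by ring.
      rewrite (Eq z Hz). ring. }
    rewrite <- Cmod_R, E. unfold Cminus.
    eapply Rle_trans; [apply Cmod_triangle|].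
    rewrite Cmod_opp, !Cmod_mult, !Cmod_R, (Rabs_right A), (Rabs_right A') by lra.
    destruct (mfun_bounds _ _ _ z Hm1 Hz) as [_ B1].
    destruct (mfun_bounds _ _ _ z Hm1' Hz) as [_ B1'].
    simpl Im in B1, B1'. unfold Rdiv. rewrite Rmult_plus_distr_r.
    apply Rplus_le_compat; apply Rmult_le_compat_l; auto. }
  split; [exact Hb|].
  assert (Key : forall z, 0 < Im z -> Cmult (RtoC A) (m1 z) = Cmult (RtoC A') (m1' z)).
  { intros z Hz. pose proof (Eq z Hz) as E. rewrite Hb in E.
    replace (Cmult (RtoC A) (m1 z)) with
      (Cminus (Cminus (RtoC (b' 1%nat)) z) (Cminus (Cminus (RtoC (b' 1%nat)) z) (Cmult (RtoC A) (m1 z)))) by ring.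
    rewrite E. ring. }
  fold A A'.
  assert (d0 : A - A' = 0); [|lra].
  set (b2 := shift_seq 1 b 1). set (A2 := shift_seq 1 a 1 ^ 2).
  set (b2' := shift_seq 1 b' 1). set (A2' := shift_seq 1 a' 1 ^ 2).
  apply (small_zero _ (A * (Rabs b2 + A2) + A' * (Rabs b2' + A2'))). intros t Ht.
  set (z := (0, t) : C). assert (Hz : 0 < Im z) by (simpl; lra).
  assert (E : RtoC (A - A') = Cminus (Cmult (RtoC A) (Cplus (Cmult z (m1 z)) 1))
                                     (Cmult (RtoC A') (Cplus (Cmult z (m1' z)) 1))).
  { rewrite RtoC_minus.
    replace (Cminus (Cmult (RtoC A) (Cplus (Cmult z (m1 z)) 1))
                    (Cmult (RtoC A') (Cplus (Cmult z (m1' z)) 1))) with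
      (Cminus (Cplus (Cmult z (Cmult (RtoC A) (m1 z))) (RtoC A))
              (Cplus (Cmult z (Cmult (RtoC A') (m1' z))) (RtoC A'))) by ring.
    rewrite (Key z Hz). ring. }
  rewrite <- Cmod_R, E. unfold Cminus.
  eapply Rle_trans; [apply Cmod_triangle|].
  rewrite Cmod_opp, !Cmod_mult, !Cmod_R, (Rabs_right A), (Rabs_right A') by lra.
  assert (S1 : shift_seq 1 a 1 <> 0) by (unfold shift_seq; simpl; auto).
  assert (S1' : shift_seq 1 a' 1 <> 0) by (unfold shift_seq; simpl; auto).
  pose proof (asym _ _ _ t Hm1 S1 Ht) as As.
  pose proof (asym _ _ _ t Hm1' S1' Ht) as As'.
  fold z b2 A2 in As. fold z b2' A2' in As'.
  unfold Rdiv in *. rewrite Rmult_plus_distr_r, !Rmult_assoc.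
  apply Rplus_le_compat; apply Rmult_le_compat_l; auto.
Qed.

Lemma uniq n : forall a b a' b' (m m' : C -> C),
  (forall j, (1 <= j)%nat -> 0 < a j) -> (forall j, (1 <= j)%nat -> 0 < a' j) ->
  is_mfun a b m -> is_mfun a' b' m' -> (forall z, 0 < Im z -> m z = m' z) ->
  a (S n) = a' (S n) /\ b (S n) = b' (S n).
Proof.
  induction n as [|n IH]; intros a b a' b' m m' Hp Hp' Hm Hm' Heq.
  - assert (h1 := Hp 1%nat (le_n _)). assert (h1' := Hp' 1%nat (le_n _)).
    assert (h2 := Hp 2%nat ltac:(lia)). assert (h2' := Hp' 2%nat ltac:(lia)).
    destruct (first_coeff a b a' b' m m' Hm Hm' ltac:(lra) ltac:(lra) ltac:(lra) ltac:(lra) Heq) as [Hb HA].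
    split; [|exact Hb]. nra.
  - assert (h1 := Hp 1%nat (le_n _)). assert (h1' := Hp' 1%nat (le_n _)).
    assert (h2 := Hp 2%nat ltac:(lia)). assert (h2' := Hp' 2%nat ltac:(lia)).
    destruct (first_coeff a b a' b' m m' Hm Hm' ltac:(lra) ltac:(lra) ltac:(lra) ltac:(lra) Heq) as [Hb HA].
    assert (Ha1 : a 1%nat = a' 1%nat) by nra.
    assert (Heq1 : forall z, 0 < Im z -> m1f a b m z = m1f a' b' m' z).
    { intros z Hz. unfold m1f. rewrite Hb, Ha1, Heq; auto. }
    destruct (IH (shift_seq 1 a) (shift_seq 1 b) (shift_seq 1 a') (shift_seq 1 b')
                 (m1f a b m) (m1f a' b' m')) as [E1 E2].
    + intros j Hj. unfold shift_seq. apply Hp. lia.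
    + intros j Hj. unfold shift_seq. apply Hp'. lia.
    + apply mfun_shift; auto; lra.
    + apply mfun_shift; auto; lra.
    + exact Heq1.
    + unfold shift_seq in E1, E2. rewrite Nat.add_1_r in E1, E2. auto.
Qed.

Lemma cf_ext a b a' b' z : (forall j, (1 <= j)%nat -> a j = a' j /\ b j = b' j) ->
  forall n k, (1 <= k)%nat -> cf_approx a b k n z = cf_approx a' b' k n z.
Proof.
  intros H n. induction n as [|n IH]; intros k Hk; cbn [cf_approx]; auto.
  rewrite IH by lia. destruct (H k Hk) as [-> ->]. reflexivity.
Qed.

Lemma CL_unique u l l' : CL u l -> CL u l' -> l = l'.
Proof.
  intros H H'. apply Ceq_minus. apply Cmod_eq_0.
  destruct (Rle_lt_dec (Cmod (Cminus l l')) 0) as [Hle|Hlt].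
  { pose proof (Cmod_ge_0 (Cminus l l')). lra. }
  exfalso. set (d := Cmod (Cminus l l')) in *.
  destruct (H (d/2) ltac:(lra)) as [N HN]. destruct (H' (d/2) ltac:(lra)) as [N' HN'].
  specialize (HN (max N N') (Nat.le_max_l _ _)). specialize (HN' (max N N') (Nat.le_max_r _ _)).
  set (v := u (max N N')) in *.
  assert (E : Cminus l l' = Cplus (Cminus v l') (Copp (Cminus v l))) by ring.
  assert (d <= Cmod (Cminus v l') + Cmod (Cminus v l)).
  { unfold d. rewrite E. eapply Rle_trans; [apply Cmod_triangle|]. rewrite Cmod_opp. lra. }
  lra.
Qed.

Lemma mfun_eq a b a' b' (m m' : C -> C) z : is_mfun a b m -> is_mfun a' b' m' ->
  (forall j, (1 <= j)%nat -> a j = a' j /\ b j = b' j) -> 0 < Im z -> m z = m' z.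
Proof.
  intros Hm Hm' H Hz.
  apply (CL_unique (fun n => cf_approx a b 1 n z)).
  - apply CL_of_lim. apply Hm; auto.
  - intros eps He. destruct (CL_of_lim _ _ (Hm' z Hz) eps He) as [N HN].
    exists N. intros n Hn. rewrite cf_ext with (a' := a') (b' := b') by (auto; lia). auto.
Qed.

Lemma per_iter p a b : periodic_coeffs p a b ->
  forall q j, (1 <= j)%nat -> a (j + q * p)%nat = a j /\ b (j + q * p)%nat = b j.
Proof.
  intros H q. induction q as [|q IH]; intros j Hj.
  - rewrite Nat.mul_0_l, Nat.add_0_r. auto.
  - replace (j + S q * p)%nat with ((j + q * p) + p)%nat by lia.
    destruct (H (j + q * p)%nat ltac:(lia)) as [E1 E2]. rewrite E1, E2. apply IH; auto.
Qed.

Lemma refl_a_small p a k : (1 <= k <= p)%nat ->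
  refl_a p a k = if (k <? p)%nat then a (p - k)%nat else a p.
Proof.
  intros Hk. unfold refl_a. rewrite Nat.mod_small by lia.
  replace (S (k - 1)) with k by lia. reflexivity.
Qed.

Lemma refl_b_small p b k : (1 <= k <= p)%nat -> refl_b p b k = b (p - k + 1)%nat.
Proof.
  intros Hk. unfold refl_b. rewrite Nat.mod_small by lia.
  replace (S (k - 1)) with k by lia. reflexivity.
Qed.

Lemma refl_decomp p (a b : nat -> R) j : (1 <= p)%nat -> (1 <= j)%nat -> exists q k,
  (1 <= k <= p)%nat /\ j = (k + q * p)%nat /\ refl_a p a j = refl_a p a k /\ refl_b p b j = refl_b p b k.
Proof.
  intros Hp Hj. exists ((j - 1) / p)%nat, (S ((j - 1) mod p)).
  assert (Hr := Nat.mod_upper_bound (j - 1) p ltac:(lia)).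
  assert (Hd := Nat.div_mod_eq (j - 1) p).
  split; [lia|]. split; [lia|].
  unfold refl_a, refl_b.
  replace (S ((j - 1) mod p) - 1)%nat with ((j - 1) mod p) by lia.
  rewrite Nat.mod_mod by lia. split; reflexivity.
Qed.

Definition conds (p l : nat) (a b : nat -> R) : Prop :=
  (forall k, (1 <= k < p)%nat -> a (p - k)%nat = a (k + (l + 1))%nat) /\
  a p = a (l + 1)%nat /\
  (forall k, (1 <= k <= p)%nat -> b (p - k + 1)%nat = b (k + (l + 1))%nat).

Lemma conds_iff p l a b : (3 <= p)%nat -> periodic_coeffs p a b ->
  conds p l a b <-> (forall j, (1 <= j)%nat ->
     refl_a p a j = shift_seq (l + 1) a j /\ refl_b p b j = shift_seq (l + 1) b j).
Proof.
  intros Hp Hper. split.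
  - intros [C1 [C2 C3]] j Hj.
    destruct (refl_decomp p a b j ltac:(lia) Hj) as [q [k [Hk [-> [-> ->]]]]].
    unfold shift_seq.
    replace (k + q * p + (l + 1))%nat with ((k + (l + 1)) + q * p)%nat by lia.
    destruct (per_iter p a b Hper q (k + (l + 1)) ltac:(lia)) as [-> ->].
    rewrite refl_a_small, refl_b_small by lia.
    split; [|apply C3; lia].
    destruct (Nat.ltb_spec k p).
    + apply C1; lia.
    + replace k with p by lia. rewrite C2.
      destruct (Hper (l + 1)%nat ltac:(lia)) as [E _].
      replace (p + (l + 1))%nat with (l + 1 + p)%nat by lia. symmetry. exact E.
  - intros H. split; [|split].
    + intros k Hk. destruct (H k ltac:(lia)) as [E _].
      rewrite refl_a_small in E by lia. destruct (Nat.ltb_spec k p); [|lia]. exact E.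
    + destruct (H p ltac:(lia)) as [E _].
      rewrite refl_a_small in E by lia. destruct (Nat.ltb_spec p p); [lia|].
      rewrite E. unfold shift_seq.
      destruct (Hper (l + 1)%nat ltac:(lia)) as [E' _].
      replace (p + (l + 1))%nat with (l + 1 + p)%nat by lia. exact E'.
    + intros k Hk. destruct (H k ltac:(lia)) as [_ E].
      rewrite refl_b_small in E by lia. exact E.
Qed.

Lemma dp_iff_conds p l a b : (3 <= p)%nat -> periodic_coeffs p a b ->
  (1 <= l)%nat -> (l <= p - 2)%nat ->
  doubly_palindromic p l a b <-> conds p l a b.
Proof.
  intros Hp Hper Hl1 Hl2. split.
  - intros [_ [_ [_ [D1 [D2 [D3 D4]]]]]]. split; [|split].
    + intros k Hk. destruct (Nat.le_gt_cases k (p - l - 1)).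
      * specialize (D2 (S k) ltac:(lia)).
        replace (l + S k)%nat with (k + (l + 1))%nat in D2 by lia.
        replace (p + 1 - S k)%nat with (p - k)%nat in D2 by lia. auto.
      * set (r := (k + l + 1 - p)%nat).
        specialize (D1 r ltac:(lia)).
        replace (l + 1 - r)%nat with (p - k)%nat in D1 by lia.
        destruct (Hper r ltac:(lia)) as [E _].
        replace (r + p)%nat with (k + (l + 1))%nat in E by lia.
        rewrite E. auto.
    + specialize (D2 1%nat ltac:(lia)).
      replace (p + 1 - 1)%nat with p in D2 by lia. auto.
    + intros k Hk. destruct (Nat.le_gt_cases k (p - l - 1)).
      * specialize (D4 k ltac:(lia)).
        replace (l + 1 + k)%nat with (k + (l + 1))%nat in D4 by lia.
        replace (p + 1 - k)%nat with (p - k + 1)%nat in D4 by lia. auto.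
      * set (r := (k + l + 1 - p)%nat).
        specialize (D3 r ltac:(lia)).
        replace (l + 2 - r)%nat with (p - k + 1)%nat in D3 by lia.
        destruct (Hper r ltac:(lia)) as [_ E].
        replace (r + p)%nat with (k + (l + 1))%nat in E by lia.
        rewrite E. auto.
  - intros [C1 [C2 C3]].
    split; [exact Hper|]. split; [exact Hl1|]. split; [exact Hl2|].
    split; [|split; [|split]].
    + intros i Hi. specialize (C1 (p - l - 1 + i)%nat ltac:(lia)).
      replace (p - (p - l - 1 + i))%nat with (l + 1 - i)%nat in C1 by lia.
      destruct (Hper i ltac:(lia)) as [E _].
      replace (p - l - 1 + i + (l + 1))%nat with (i + p)%nat in C1 by lia.
      rewrite C1, E. reflexivity.
    + intros i Hi. destruct (Nat.eq_dec i 1) as [->|Hi1].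
      * replace (p + 1 - 1)%nat with p by lia. rewrite C2. reflexivity.
      * specialize (C1 (i - 1)%nat ltac:(lia)).
        replace (p - (i - 1))%nat with (p + 1 - i)%nat in C1 by lia.
        replace (i - 1 + (l + 1))%nat with (l + i)%nat in C1 by lia. auto.
    + intros i Hi. specialize (C3 (p - l - 1 + i)%nat ltac:(lia)).
      replace (p - (p - l - 1 + i) + 1)%nat with (l + 2 - i)%nat in C3 by lia.
      destruct (Hper i ltac:(lia)) as [_ E].
      replace (p - l - 1 + i + (l + 1))%nat with (i + p)%nat in C3 by lia.
      rewrite C3, E. reflexivity.
    + intros i Hi. specialize (C3 i ltac:(lia)).
      replace (p - i + 1)%nat with (p + 1 - i)%nat in C3 by lia.
      replace (i + (l + 1))%nat with (l + 1 + i)%nat in C3 by lia. auto.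
Qed.

Theorem mainTheorem4 (p l : nat) (a b : nat -> R) (mminus mshift : C -> C) :
  (3 <= p)%nat ->
  periodic_coeffs p a b ->
  (forall j : nat, (1 <= j)%nat -> 0 < a j) ->
  (1 <= l)%nat -> (l <= p - 2)%nat ->
  is_mfun (refl_a p a) (refl_b p b) mminus ->
  is_mfun (shift_seq (l + 1) a) (shift_seq (l + 1) b) mshift ->
  (doubly_palindromic p l a b <-> (forall z : C, 0 < Im z -> mminus z = mshift z)).
Proof.
  intros Hp Hper Hpos Hl1 Hl2 Hm Hs.
  rewrite (dp_iff_conds p l a b Hp Hper Hl1 Hl2), (conds_iff p l a b Hp Hper).
  split.
  - intros H z Hz. exact (mfun_eq _ _ _ _ _ _ z Hm Hs H Hz).
  - intros Heq j Hj. destruct j as [|n]; [lia|].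
    apply (uniq n _ _ _ _ mminus mshift); auto.
    + intros k Hk. unfold refl_a. destruct (_ <? _)%nat eqn:E.
      * apply Nat.ltb_lt in E. apply Hpos. lia.
      * apply Hpos. lia.
    + intros k Hk. unfold shift_seq. apply Hpos. lia.
Qed.
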